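(* Let $\zeta_3=\int_0^\infty \frac{\mathrm{d}t}{\sqrt{1+t^6}}$ and let $\mathrm{sleafh}_3:(-\zeta_3,\zeta_3)\to\mathbb{R}$ be the hyperbolic leaf function of basis $3$. For every real $l$ with $2l\in(-\zeta_3,\zeta_3)$, $$\mathrm{sleafh}_3(2l)=\frac{2\,\mathrm{sleafh}_3(l)\sqrt{1+(\mathrm{sleafh}_3(l))^6}}{\sqrt{1-8(\mathrm{sleafh}_3(l))^6}}.$$
   Context: For a natural number $n$, let $\zeta_n=\int_0^\infty \frac{\mathrm{d}t}{\sqrt{1+t^{2n}}}$. The hyperbolic leaf function $\mathrm{sleafh}_n$ is the solution $r(l)$ on $(-\zeta_n,\zeta_n)$ of $\frac{\mathrm{d}^2r}{\mathrm{d}l^2}=n\,r^{2n-1}$ with $r(0)=0$, $r'(0)=1$; equivalently it is the inverse function of $r\mapsto \int_0^r \frac{\mathrm{d}t}{\sqrt{1+t^{2n}}}$, $r\in\mathbb{R}$. *)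

(* Defs.v *)
From Stdlib Require Import Reals Lra ClassicalEpsilon.
From Coquelicot Require Import Coquelicot.
Open Scope R_scope.

Definition leafF (n : nat) (r : R) : R :=
  RInt (fun t => / sqrt (1 + t ^ (2 * n))) 0 r.

Definition zeta (n : nat) : Rbar := Lim (leafF n) p_infty.

Definition sleafh (n : nat) (l : R) : R :=
  epsilon (inhabits 0) (fun r => leafF n r = l).

(* Main.v *)
Require Import Defs.
From Stdlib Require Import ssreflect Reals Lra Nsatz ClassicalEpsilon.
From Coquelicot Require Import Coquelicot.
Open Scope R_scope.
Ltac fold6 t := change (t * (t * (t * (t * (t * (t * 1)))))) with (t^6) in *.

Definition ff (t : R) : R := / sqrt (1 + t ^ 6).
Definition FF (r : R) : R := RInt ff 0 r.

Lemma FF_eq : leafF 3 = FF.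
Proof. reflexivity. Qed.

Lemma ff_pos t : 0 < ff t.
Proof.
  unfold ff. apply Rinv_0_lt_compat, sqrt_lt_R0.
  assert (0 <= t^6) by (replace (t^6) with ((t^3)^2) by ring; apply pow2_ge_0). lra.
Qed.

Lemma ff_der t : is_derive ff t (- (6 * t^5) / (2 * sqrt (1 + t^6)) / (sqrt (1 + t^6))^2).
Proof.
  assert (H6 : 0 <= t^6) by (replace (t^6) with ((t^3)^2) by ring; apply pow2_ge_0).
  assert (Hs : 0 < sqrt (1 + t^6)) by (apply sqrt_lt_R0; lra).
  unfold ff. auto_derive; change (t * (t * (t * (t * (t * (t * 1)))))) with (t^6).
  - repeat split; lra.
  - field. lra.
Qed.

Lemma ff_cont t : continuous ff t.
Proof. apply: ex_derive_continuous. eexists. apply ff_der. Qed.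

Lemma ff_exRInt a b : ex_RInt ff a b.
Proof. apply: (@ex_RInt_continuous R_CompleteNormedModule). intros; apply ff_cont. Qed.

Lemma FF_der x : is_derive FF x (ff x).
Proof.
  apply is_derive_RInt with 0.
  - exists (mkposreal 1 Rlt_0_1). intros y _. apply: (@RInt_correct R_CompleteNormedModule). apply ff_exRInt.
  - apply ff_cont.
Qed.

Lemma FF_cont x : continuous FF x.
Proof. apply: ex_derive_continuous. eexists. apply FF_der. Qed.

Lemma FF_incr x y : x < y -> FF x < FF y.
Proof.
  intro H. apply (incr_function FF m_infty p_infty ff); try easy.
  intros; apply FF_der. intros; apply ff_pos.
Qed.

Lemma FF_inj x y : FF x = FF y -> x = y.
Proof.
  intro H. destruct (Rtotal_order x y) as [h|[h|h]]; auto.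
  apply FF_incr in h; lra. apply FF_incr in h; lra.
Qed.

Lemma FF_0 : FF 0 = 0.
Proof. unfold FF. have := (@RInt_point R_CompleteNormedModule 0 ff). done. Qed.

Lemma FF_odd x : FF (- x) = - FF x.
Proof.
  assert (H : forall a b, a < b -> FF (-a) + FF a = FF (-b) + FF b).
  { intros a b hab.
    apply (eq_is_derive (fun t => FF (-t) + FF t)); auto.
    intros t _.
    evar (d : R).
    assert (is_derive (fun t => FF (-t) + FF t) t d).
    { apply: is_derive_plus. 
      apply (is_derive_comp FF (fun t => -t)). apply FF_der.
      auto_derive; auto. apply FF_der. }
    replace (@zero R_NormedModule) with d. auto. unfold d.
    unfold ff. simpl. rewrite /scal /= /mult /=. replace ((-t)*((-t)*((-t)*((-t)*((-t)*((-t)*1)))))) with (t*(t*(t*(t*(t*(t*1)))))) by ring.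
    rewrite /plus /zero /=. ring. }
  destruct (Rtotal_order x 0) as [h|[h|h]].
  - specialize (H x 0 h). rewrite Ropp_0 FF_0 in H. lra.
  - subst. rewrite Ropp_0 FF_0. lra.
  - specialize (H 0 x h). rewrite Ropp_0 FF_0 in H. lra.
Qed.

Definition gg (s : R) := 2 * s * sqrt (1 + s ^ 6) / sqrt (1 - 8 * s ^ 6).
Definition PP (s : R) := 1 + 20 * s^6 - 8 * (s^6)^2.

Lemma gg_der s : 0 < 1 - 8 * s^6 ->
  is_derive gg s (2 * PP s / (sqrt (1 + s^6) * (sqrt (1 - 8 * s^6))^3)).
Proof.
  intro H.
  assert (H6 : 0 <= s^6) by (replace (s^6) with ((s^3)^2) by ring; apply pow2_ge_0).
  assert (HA : 0 < sqrt (1 + s^6)) by (apply sqrt_lt_R0; lra).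
  assert (HB : 0 < sqrt (1 - 8 * s^6)) by (apply sqrt_lt_R0; lra).
  have HA2 := sqrt_sqrt (1 + s^6) ltac:(lra).
  have HB2 := sqrt_sqrt (1 - 8 * s^6) ltac:(lra).
  unfold gg. auto_derive; change (s * (s * (s * (s * (s * (s * 1)))))) with (s^6).
  - change (1 + - (8 * s^6)) with (1 - 8 * s^6). repeat split; try lra.
  - change (1 + - (8 * s^6)) with (1 - 8 * s^6). change (s * (s * (s * (s * (s * 1))))) with (s^5). unfold PP.
    set A := sqrt (1 + s^6) in HA HA2 |- *. set B := sqrt (1 - 8 * s^6) in HB HB2 |- *.
    field_simplify; try lra.
    apply (f_equal (fun x => x / (A * B^3))).
    replace (A^2) with (A*A) by ring. replace (B^2) with (B*B) by ring.
    rewrite HA2 HB2. ring.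
Qed.

Lemma six_nonneg s : 0 <= s^6.
Proof. replace (s^6) with ((s^3)^2) by ring; apply pow2_ge_0. Qed.

Lemma PP_pos s : 0 < 1 - 8 * s^6 -> 0 < PP s.
Proof. intro H. have := six_nonneg s. unfold PP. nra. Qed.

Lemma gg_sqrt s : 0 < 1 - 8 * s^6 ->
  sqrt (1 + (gg s)^6) = PP s / (sqrt (1 - 8 * s^6))^3.
Proof.
  intro H. have H6 := six_nonneg s. have HP := PP_pos s H.
  assert (HA : 0 < sqrt (1 + s^6)) by (apply sqrt_lt_R0; lra).
  assert (HB : 0 < sqrt (1 - 8 * s^6)) by (apply sqrt_lt_R0; lra).
  have HA2 := sqrt_sqrt (1 + s^6) ltac:(lra).
  have HB2 := sqrt_sqrt (1 - 8 * s^6) ltac:(lra).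
  unfold gg.
  set A := sqrt (1 + s^6) in HA HA2 |- *. set B := sqrt (1 - 8 * s^6) in HB HB2 |- *.
  apply sqrt_lem_1.
  - have := six_nonneg (2 * s * A / B). lra.
  - apply Rlt_le, Rdiv_lt_0_compat; auto. apply pow_lt; auto.
  - replace ((2 * s * A / B)^6) with (64 * s^6 * (A*A)^3 / (B*B)^3) by (field; lra).
    replace (PP s / B ^ 3 * (PP s / B ^ 3)) with (PP s ^2 / (B*B)^3) by (field; lra).
    rewrite HA2 HB2. unfold PP. field. lra.
Qed.

Lemma dup_der t : 0 < 1 - 8 * t^6 -> is_derive (fun t => FF (gg t) - 2 * FF t) t 0.
Proof.
  intro H. have H6 := six_nonneg t. have HP := PP_pos t H.
  assert (HA : 0 < sqrt (1 + t^6)) by (apply sqrt_lt_R0; lra).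
  assert (HB : 0 < sqrt (1 - 8 * t^6)) by (apply sqrt_lt_R0; lra).
  evar (d : R).
  assert (is_derive (fun t => FF (gg t) - 2 * FF t) t d).
  { apply: is_derive_minus.
    apply: is_derive_comp. apply FF_der. apply gg_der; auto.
    apply is_derive_scal. apply FF_der. }
  replace (0 : R) with d; auto. unfold d.
  rewrite /scal /= /mult /= /minus /plus /opp /=.
  unfold ff. rewrite gg_sqrt; auto.
  change (t * (t * (t * (t * (t * (t * 1)))))) with (t^6). field. repeat split; lra.
Qed.

Lemma small_between s t : 0 < 1 - 8 * s^6 -> Rmin 0 s <= t <= Rmax 0 s -> 0 < 1 - 8 * t^6.
Proof.
  intros H Ht.
  assert (t^2 <= s^2).
  { unfold Rmin, Rmax in Ht. destruct (Rle_dec 0 s); nra. }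
  assert (t^6 <= s^6).
  { replace (t^6) with ((t^2)^3) by ring. replace (s^6) with ((s^2)^3) by ring.
    apply pow_incr. split; auto. apply pow2_ge_0. }
  lra.
Qed.

Lemma dup s : 0 < 1 - 8 * s^6 -> FF (gg s) = 2 * FF s.
Proof.
  intro H.
  assert (Hg0 : gg 0 = 0) by (unfold gg; simpl; field; rewrite Rmult_0_l Rmult_0_r Rminus_0_r sqrt_1; lra).
  destruct (Rtotal_order s 0) as [h|[h|h]].
  - have := eq_is_derive (fun t => FF (gg t) - 2 * FF t) s 0.
    rewrite Hg0 FF_0 /=. intro E. enough (FF (gg s) - 2 * FF s = 0) by lra.
    rewrite E; auto. lra.
    intros t Ht. apply dup_der. apply (small_between s); auto.
    rewrite Rmin_right ?Rmax_left; lra.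
  - subst. rewrite Hg0 FF_0. lra.
  - have := eq_is_derive (fun t => FF (gg t) - 2 * FF t) 0 s.
    rewrite Hg0 FF_0 /=. intro E. enough (FF (gg s) - 2 * FF s = 0) by lra.
    rewrite -E; auto. lra.
    intros t Ht. apply dup_der. apply (small_between s); auto.
    rewrite Rmin_left ?Rmax_right; lra.
Qed.

Definition s0 := / sqrt 2.

Lemma s0_pos : 0 < s0.
Proof. unfold s0. apply Rinv_0_lt_compat, sqrt_lt_R0; lra. Qed.

Lemma s0_sq : s0 ^ 2 = / 2.
Proof.
  unfold s0. have H := sqrt_sqrt 2 ltac:(lra). have := sqrt_lt_R0 2 ltac:(lra).
  intro. rewrite pow_inv. simpl. rewrite Rmult_1_r H. reflexivity.
Qed.

Lemma s0_6 : 1 - 8 * s0 ^ 6 = 0.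
Proof. replace (s0^6) with ((s0^2)^3) by ring. rewrite s0_sq. field. Qed.

Lemma below_s0 s : 0 <= s < s0 -> 0 < 1 - 8 * s^6.
Proof.
  intro H. have E := s0_sq. have P := s0_pos.
  assert (h2 : s^2 < /2).
  { rewrite -E. simpl. rewrite !Rmult_1_r. apply Rmult_le_0_lt_compat; lra. }
  assert (0 <= s^2) by apply pow2_ge_0.
  replace (s^6) with ((s^2)^3) by ring. set a := s^2 in h2 H0 |- *.
  assert (a * a < /4) by nra. assert (a*a*a < /8) by nra. simpl. nra.
Qed.

Lemma cont_poly_sqrt (a b : R) x : continuous (fun s => sqrt (a + b * s^6)) x.
Proof.
  apply: (continuous_comp (fun s => a + b * s^6) sqrt).
  apply: ex_derive_continuous. auto_derive; auto.
  apply continuous_sqrt.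
Qed.

Lemma gg_onto y : 0 <= y -> exists s, 0 <= s < s0 /\ 0 < 1 - 8 * s^6 /\ gg s = y.
Proof.
  intro Hy.
  set k := fun s => y * sqrt (1 + (-8) * s^6) - 2 * s * sqrt (1 + 1 * s^6).
  assert (Hk : forall x, continuous k x).
  { intro x. unfold k. apply: continuous_minus.
    apply: continuous_mult. apply continuous_const. apply cont_poly_sqrt.
    apply: continuous_mult. apply: continuous_mult. apply continuous_const. apply continuous_id.
    apply cont_poly_sqrt. }
  have Hs0 := s0_pos. have H6 := s0_6.
  assert (k0 : k 0 = y).
  { unfold k. simpl. rewrite !Rmult_0_l Rmult_0_r Rplus_0_r sqrt_1. ring. }
  assert (ks0 : k s0 < 0).
  { unfold k. replace (1 + -8 * s0^6) with 0 by lra. rewrite sqrt_0.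
    have := sqrt_lt_R0 (1 + 1 * s0^6) ltac:(have := six_nonneg s0; lra). nra. }
  destruct (IVT_gen_consistent k 0 s0 0 Hk) as [x [Hx Hkx]].
  { rewrite k0 Rmin_right ?Rmax_left; lra. }
  rewrite Rmin_left ?Rmax_right in Hx; try lra.
  assert (x <> s0) by (intro E; rewrite E in Hkx; lra).
  assert (Hx' : 0 <= x < s0) by lra.
  exists x. split; auto. have HB := below_s0 x Hx'. split; auto.
  unfold k in Hkx. unfold gg.
  replace (1 + -8 * x^6) with (1 - 8 * x^6) in Hkx by ring.
  replace (1 + 1 * x^6) with (1 + x^6) in Hkx by ring.
  have := sqrt_lt_R0 _ HB. intro. field_simplify_eq; lra.
Qed.

Lemma ff_lt1 t : 0 < t -> ff t < 1.
Proof.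
  intro H. unfold ff. have := pow_lt t 6 H. intro.
  have : 1 < sqrt (1 + t^6).
  { have := sqrt_lt_1_alt 1 (1 + t^6) ltac:(lra). rewrite sqrt_1. auto. }
  intro. have := Rinv_lt_contravar 1 (sqrt (1 + t^6)) ltac:(lra) ltac:(lra). rewrite Rinv_1. auto.
Qed.

Lemma FF_lip x y : 0 < x -> x < y -> FF y - FF x < y - x.
Proof.
  intros hx hxy.
  have := incr_function (fun t => t - FF t) (Finite 0) p_infty (fun t => 1 - ff t).
  intro K. enough (x - FF x < y - FF y) by lra. apply K; auto.
  - intros t h1 h2. apply: is_derive_minus. apply: is_derive_id. apply FF_der.
  - intros t h1 h2. simpl in h1. have := ff_lt1 t h1. lra.
  - easy.
Qed.

Lemma FF_lim : is_lim FF p_infty (2 * FF s0).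
Proof.
  apply is_lim_spec. intro eps. simpl.
  have Hs0 := s0_pos. have He := cond_pos eps.
  set s1 := Rmax (s0 / 2) (s0 - eps / 4).
  assert (h1 : s0 / 2 <= s1) by apply Rmax_l.
  assert (h2 : s0 - eps / 4 <= s1) by apply Rmax_r.
  assert (h3 : s1 < s0) by (unfold s1, Rmax; destruct Rle_dec; lra).
  have Hs1 := below_s0 s1 ltac:(lra).
  exists (gg s1). intros x Hx.
  assert (Hgs1 : 0 <= gg s1).
  { unfold gg. have := sqrt_lt_R0 _ Hs1. intro.
    have := sqrt_lt_R0 (1 + s1^6) ltac:(have := six_nonneg s1; lra). intro.
    apply Rlt_le, Rdiv_lt_0_compat; nra. }
  destruct (gg_onto x ltac:(lra)) as [s [Hs [HB Hgs]]].
  have := dup s HB. rewrite Hgs. intro E.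
  have := FF_incr s s0 ltac:(lra).
  have := FF_incr (gg s1) x Hx. rewrite dup; auto. intro.
  have := FF_lip s1 s0 ltac:(lra) h3. intros.
  rewrite Rabs_left; lra.
Qed.

Lemma zeta3 : zeta 3 = Finite (2 * FF s0).
Proof. unfold zeta. rewrite FF_eq. apply is_lim_unique, FF_lim. Qed.

Theorem mainTheorem10 (l : R) :
  Rbar_lt (Rbar_opp (zeta 3)) (Finite (2 * l)) ->
  Rbar_lt (Finite (2 * l)) (zeta 3) ->
  sleafh 3 (2 * l) =
    2 * sleafh 3 l * sqrt (1 + (sleafh 3 l) ^ 6) / sqrt (1 - 8 * (sleafh 3 l) ^ 6).
Proof.
  rewrite zeta3 /=. intros H1 H2.
  set c := FF s0 in H1 H2.
  have Hs0 := s0_pos.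
  have Hc : 0 < c by (have := FF_incr 0 s0 Hs0; rewrite FF_0; auto).
  destruct (IVT_gen_consistent FF (-s0) s0 l FF_cont) as [s [Hs Hfs]].
  { rewrite FF_odd. fold c. rewrite Rmin_left ?Rmax_right; lra. }
  rewrite Rmin_left ?Rmax_right in Hs; try lra.
  assert (s <> s0) by (intro E; rewrite E in Hfs; fold c in Hfs; lra).
  assert (s <> - s0) by (intro E; rewrite E FF_odd in Hfs; fold c in Hfs; lra).
  assert (HB : 0 < 1 - 8 * s^6).
  { destruct (Rle_dec 0 s).
    - apply below_s0; lra.
    - have := below_s0 (-s) ltac:(lra). replace ((-s)^6) with (s^6) by ring. auto. }
  assert (E1 : sleafh 3 l = s).
  { unfold sleafh. apply FF_inj. rewrite -FF_eq.
    have Ex : exists r, leafF 3 r = l by exists s; rewrite FF_eq; auto.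
    have Ee := epsilon_spec (inhabits 0) (fun r => leafF 3 r = l) Ex.
    simpl in Ee. rewrite Ee FF_eq; auto. }
  assert (E2 : sleafh 3 (2 * l) = gg s).
  { unfold sleafh. apply FF_inj. rewrite -FF_eq.
    have Ex : exists r, leafF 3 r = 2 * l by exists (gg s); rewrite FF_eq dup; auto; lra.
    have Ee := epsilon_spec (inhabits 0) (fun r => leafF 3 r = 2 * l) Ex.
    simpl in Ee. rewrite Ee FF_eq dup; auto; lra. }
  rewrite E2 E1. reflexivity.
Qed.
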